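(* Let $X$ be a Tychonoff space. The following are equivalent: (1) $(C(X),\tau_\Gamma)$ is second countable; (2) $(C(X),\tau_\Gamma)$ has a countable network; (3) $(C(X),\tau_\Gamma)$ is separable; (4) $(C(X),\tau_\Gamma)$ has the countable chain condition; (5) $X$ is compact and metrizable.
   Context: $C(X)$ is the set of continuous real-valued functions on $X$, each identified with its graph in $X\times\mathbb{R}$. The graph topology $\tau_\Gamma$ on $C(X)$ has base $\{F_G: G\text{ open in }X\times\mathbb{R}\}$ where $F_G=\{f\in C(X): f\subset G\}$. *)

(* Defs.v *)
From Stdlib Require Import Reals List.
Open Scope R_scope.

Definition is_topology {X : Type} (T : (X -> Prop) -> Prop) : Prop :=
  T (fun _ => True) /\
  (forall U V, T U -> T V -> T (fun x => U x /\ V x)) /\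
  (forall F : (X -> Prop) -> Prop, (forall U, F U -> T U) ->
     T (fun x => exists U, F U /\ U x)).

Definition R_open (U : R -> Prop) : Prop :=
  forall x, U x -> exists e, 0 < e /\ forall y, Rabs (y - x) < e -> U y.

Definition continuous_real {X : Type} (T : (X -> Prop) -> Prop) (f : X -> R) : Prop :=
  forall U, R_open U -> T (fun x => U (f x)).

Definition T1 {X : Type} (T : (X -> Prop) -> Prop) : Prop :=
  forall x y : X, x <> y -> exists U, T U /\ U x /\ ~ U y.

Definition completely_regular {X : Type} (T : (X -> Prop) -> Prop) : Prop :=
  forall (A : X -> Prop) (x : X), T (fun y => ~ A y) -> ~ A x ->
    exists f, continuous_real T f /\ f x = 0 /\ (forall y, A y -> f y = 1) /\
              (forall y, 0 <= f y <= 1).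

Definition tychonoff {X : Type} (T : (X -> Prop) -> Prop) : Prop :=
  is_topology T /\ T1 T /\ completely_regular T.

Definition compact_space {X : Type} (T : (X -> Prop) -> Prop) : Prop :=
  forall C : (X -> Prop) -> Prop,
    (forall U, C U -> T U) -> (forall x, exists U, C U /\ U x) ->
    exists l : list (X -> Prop), (forall U, In U l -> C U) /\
                                 (forall x, exists U, In U l /\ U x).

Definition is_metric {X : Type} (d : X -> X -> R) : Prop :=
  (forall x y, 0 <= d x y) /\ (forall x y, d x y = 0 <-> x = y) /\
  (forall x y, d x y = d y x) /\ (forall x y z, d x z <= d x y + d y z).

Definition metric_open {X : Type} (d : X -> X -> R) (U : X -> Prop) : Prop :=
  forall x, U x -> exists e, 0 < e /\ forall y, d x y < e -> U y.

Definition metrizable {X : Type} (T : (X -> Prop) -> Prop) : Prop :=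
  exists d, is_metric d /\ forall U, T U <-> metric_open d U.

Definition CX {X : Type} (T : (X -> Prop) -> Prop) : Type :=
  { f : X -> R | continuous_real T f }.

Definition prod_open {X : Type} (T : (X -> Prop) -> Prop) (G : X * R -> Prop) : Prop :=
  forall x y, G (x, y) -> exists U e, T U /\ U x /\ 0 < e /\
    forall x' y', U x' -> Rabs (y' - y) < e -> G (x', y').

Definition graph_in {X : Type} {T : (X -> Prop) -> Prop} (f : CX T) (G : X * R -> Prop) : Prop :=
  forall x, G (x, proj1_sig f x).

Definition F_ {X : Type} {T : (X -> Prop) -> Prop} (G : X * R -> Prop) : CX T -> Prop :=
  fun f => graph_in f G.

(* Graph topology: topology generated by the base {F_G : G open in X x R}. *)
Definition graph_open {X : Type} (T : (X -> Prop) -> Prop) (W : CX T -> Prop) : Prop :=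
  forall f, W f -> exists G, prod_open T G /\ graph_in f G /\
                          forall g, F_ (T := T) G g -> W g.

Definition second_countable {A : Type} (O : (A -> Prop) -> Prop) : Prop :=
  exists B : nat -> (A -> Prop), (forall n, O (B n)) /\
    forall W, O W -> forall a, W a -> exists n, B n a /\ forall b, B n b -> W b.

Definition countable_network {A : Type} (O : (A -> Prop) -> Prop) : Prop :=
  exists N : nat -> (A -> Prop),
    forall W, O W -> forall a, W a -> exists n, N n a /\ forall b, N n b -> W b.

Definition separable {A : Type} (O : (A -> Prop) -> Prop) : Prop :=
  exists D : nat -> A, forall W, O W -> (exists a, W a) -> exists n, W (D n).

Definition ccc {A : Type} (O : (A -> Prop) -> Prop) : Prop :=
  forall F : (A -> Prop) -> Prop,
    (forall W, F W -> O W /\ exists a, W a) ->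
    (forall W V, F W -> F V -> W <> V -> forall a, ~ (W a /\ V a)) ->
    exists e : nat -> (A -> Prop), forall W, F W -> exists n, e n = W.

(* Main.v *)
Require Import Defs.
From Stdlib Require Import Reals List.
From Stdlib Require Import ZArith Lra Lia Classical ClassicalEpsilon FunctionalExtensionality PropExtensionality Cantor.
From mathcomp Require classical_sets.
Open Scope R_scope.
Module ZW.
From mathcomp Require Import all_boot classical_sets boolp.
Local Open Scope classical_set_scope.
Lemma my_zorn (T:Type) (P : (T -> Prop) -> Prop) :
  (forall F : (T->Prop)->Prop, (forall A, F A -> P A) ->
     (forall A B, F A -> F B -> (forall x, A x -> B x) \/ (forall x, B x -> A x)) ->
     P (fun x => exists A, F A /\ A x)) ->
  exists A, P A /\ forall B, (forall x, A x -> B x) -> P B -> forall x, B x -> A x.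
Proof.
move=> H.
have Hz : forall F : set (set T), F `<=` P -> total_on F subset ->
      P (\bigcup_(X in F) X).
  move=> F FP tot.
  have -> : (\bigcup_(X in F) X) = (fun x => exists A, F A /\ A x).
    by apply/funext => x; apply/propext; split => [[Y FY Yx]|[Y [FY Yx]]]; exists Y.
  apply: H; first by move=> A FA; exact: FP.
  move=> a b Fa Fb; case: (tot a b Fa Fb) => h; [left|right]; exact: h.
have [A [PA Amax]] := @Zorn_bigcup T P Hz.
exists A; split => // B AB PB x Bx.
apply: contrapT => nAx.
apply: (Amax B) => //; split => //.
by move=> BA; apply: nAx; exact: BA.
Qed.
End ZW.

Lemma pred_ext {A : Type} (P Q : A -> Prop) : (forall x, P x <-> Q x) -> P = Q.
Proof. intros H; apply functional_extensionality; intro x; apply propositional_extensionality; auto. Qed.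

Section Topo.
Context {X : Type} (T : (X -> Prop) -> Prop) (HT : is_topology T).

Lemma T_ext U V : T U -> (forall x, U x <-> V x) -> T V.
Proof. intros H E; rewrite <- (pred_ext U V E); exact H. Qed.

Lemma T_full : T (fun _ => True).
Proof. destruct HT as [? [? ?]]; auto. Qed.

Lemma T_inter U V : T U -> T V -> T (fun x => U x /\ V x).
Proof. destruct HT as [? [? ?]]; auto. Qed.

Lemma T_union (F : (X -> Prop) -> Prop) : (forall U, F U -> T U) -> T (fun x => exists U, F U /\ U x).
Proof. destruct HT as [? [? ?]]; auto. Qed.

Lemma T_empty : T (fun _ => False).
Proof.
  eapply T_ext. apply (T_union (fun _ => False)). intros U [].
  intro x; split. intros [U [[] _]]. intros [].
Qed.

Lemma T_const (P : Prop) : T (fun _ => P).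
Proof.
  destruct (classic P) as [p|np].
  - eapply T_ext. apply T_full. intuition.
  - eapply T_ext. apply T_empty. intuition.
Qed.

Lemma cont_ball (f : X -> R) c r : continuous_real T f -> T (fun x => Rabs (f x - c) < r).
Proof.
  intros Hf. apply (Hf (fun y => Rabs (y - c) < r)).
  intros y Hy. exists (r - Rabs (y - c)); split. lra.
  intros z Hz. pose proof (Rabs_triang (z - y) (y - c)).
  replace (z - y + (y - c)) with (z - c) in H by ring. lra.
Qed.

Lemma cont_lt (f : X -> R) c : continuous_real T f -> T (fun x => f x < c).
Proof.
  intros Hf. apply (Hf (fun y => y < c)).
  intros y Hy. exists (c - y); split. lra.
  intros z Hz. pose proof (Rle_abs (z - y)). lra.
Qed.

Lemma cont_const c : continuous_real T (fun _ => c).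
Proof. intros U _. apply T_const. Qed.

Definition tube (h : X -> R) (r : R) : X * R -> Prop :=
  fun p => Rabs (snd p - h (fst p)) < r.

Lemma tube_open h r : continuous_real T h -> prod_open T (tube h r).
Proof.
  intros Hh x y Hxy. unfold tube in Hxy; simpl in Hxy.
  set (d := (r - Rabs (y - h x)) / 2).
  exists (fun x' => Rabs (h x' - h x) < d), d.
  split. apply cont_ball; auto.
  split. unfold Rminus; rewrite Rplus_opp_r, Rabs_R0; unfold d; lra.
  split. unfold d; lra.
  intros x' y' Hx' Hy'. unfold tube; simpl.
  pose proof (Rabs_triang (y' - y) (y - h x')).
  pose proof (Rabs_triang (y - h x) (h x - h x')).
  rewrite Rabs_minus_sym in Hx'.
  replace (y' - y + (y - h x')) with (y' - h x') in H by ring.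
  replace (y - h x + (h x - h x')) with (y - h x') in H0 by ring.
  unfold d in *; lra.
Qed.

Lemma basic_open (G : X * R -> Prop) : prod_open T G -> graph_open T (F_ (T:=T) G).
Proof. intros HG f Hf. exists G; split; auto. Qed.

End Topo.

Definition seqsup (a : nat -> R) : R :=
  epsilon (inhabits 0) (fun m => is_lub (fun r => exists n, r = a n) m).

Lemma seqsup_spec a B : (forall n, a n <= B) -> is_lub (fun r => exists n, r = a n) (seqsup a).
Proof.
  intros HB. unfold seqsup. apply epsilon_spec.
  destruct (completeness (fun r => exists n, r = a n)) as [m Hm].
  - exists B. intros r [n ->]. auto.
  - exists (a 0%nat). eauto.
  - eauto.
Qed.

Lemma seqsup_ge a B n : (forall n, a n <= B) -> a n <= seqsup a.
Proof. intros HB. destruct (seqsup_spec a B HB) as [H _]. apply H. eauto. Qed.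

Lemma seqsup_le a B b : (forall n, a n <= B) -> (forall n, a n <= b) -> seqsup a <= b.
Proof. intros HB Hb. destruct (seqsup_spec a B HB) as [_ H]. apply H. intros r [n ->]; auto. Qed.

Lemma nat_gt (r : R) : exists n : nat, r < INR n.
Proof.
  destruct (archimed r) as [H1 _].
  destruct (Z_lt_le_dec (up r) 0) as [Hz|Hz].
  - exists 0%nat. simpl. apply IZR_lt in Hz. lra.
  - exists (Z.to_nat (up r)). rewrite INR_IZR_INZ, Z2Nat.id; auto.
Qed.

Lemma inv_small (e : R) : 0 < e -> exists n : nat, / (INR n + 1) < e.
Proof.
  intros He. destruct (nat_gt (/ e)) as [n Hn]. exists n.
  pose proof (pos_INR n).
  apply Rmult_lt_reg_l with (INR n + 1). lra.
  rewrite Rinv_r by lra.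
  apply Rmult_lt_reg_l with (/ e). apply Rinv_0_lt_compat; lra.
  rewrite Rmult_1_r. replace (/ e * ((INR n + 1) * e)) with (INR n + 1). lra.
  field. lra.
Qed.

Lemma inv_pos (n : nat) : 0 < / (INR n + 1).
Proof. pose proof (pos_INR n). apply Rinv_0_lt_compat. lra. Qed.

Lemma inv_le1 (n : nat) : / (INR n + 1) <= 1.
Proof. pose proof (pos_INR n). rewrite <- Rinv_1. apply Rinv_le_contravar; lra. Qed.

Lemma sc_net {A : Type} (O : (A -> Prop) -> Prop) : second_countable O -> countable_network O.
Proof. intros [B [_ HB]]. exists B. exact HB. Qed.

Lemma net_sep {A : Type} (O : (A -> Prop) -> Prop) (a0 : A) : countable_network O -> separable O.
Proof.
  intros [N HN]. exists (fun n => epsilon (inhabits a0) (fun a => N n a)).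
  intros W HW [a Ha]. destruct (HN W HW a Ha) as [n [Hn Hsub]].
  exists n. apply Hsub. apply (epsilon_spec (inhabits a0) (fun a => N n a)). eauto.
Qed.

Lemma sep_ccc {A : Type} (O : (A -> Prop) -> Prop) : separable O -> ccc O.
Proof.
  intros [D HD] F HF Hdis.
  exists (fun n => epsilon (inhabits (fun _ : A => False)) (fun W => F W /\ W (D n))).
  intros W FW. destruct (HF W FW) as [OW neW].
  destruct (HD W OW neW) as [n Hn]. exists n.
  set (E := epsilon _ _).
  assert (HE : F E /\ E (D n)).
  { apply (epsilon_spec (inhabits (fun _ : A => False)) (fun W => F W /\ W (D n))). eauto. }
  destruct HE as [FE EDn].
  apply NNPP. intro Hne. apply (Hdis E W FE FW Hne (D n)). auto.
Qed.

Definition zeroC {X : Type} (T : (X -> Prop) -> Prop) (HT : is_topology T) : CX T :=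
  exist _ (fun _ => 0) (cont_const T HT 0).

Section D1.
Context {X : Type} (T : (X -> Prop) -> Prop) (HT : is_topology T).

Definition sepP (k : nat) (S : CX T -> Prop) : Prop :=
  forall f g : CX T, S f -> S g -> f <> g ->
    exists x, / (INR k + 1) <= Rabs (proj1_sig f x - proj1_sig g x).

Lemma ccc_level (Hc : ccc (graph_open T)) (k : nat) :
  exists c : nat -> CX T, forall g : CX T, exists n, forall x,
    Rabs (proj1_sig (c n) x - proj1_sig g x) < 2 / (INR k + 1).
Proof.
  destruct (ZW.my_zorn (CX T) (sepP k)) as [S [SS Smax]].
  { intros F FP Ftot f g [A [FA Af]] [B [FB Bg]] fg.
    destruct (Ftot A B FA FB) as [AB|BA].
    - apply (FP B FB); auto.
    - apply (FP A FA); auto. }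
  assert (Hnear : forall g : CX T, exists f, S f /\ forall x,
             Rabs (proj1_sig f x - proj1_sig g x) < / (INR k + 1)).
  { intros g. destruct (classic (S g)) as [Sg|nSg].
    - exists g; split; auto. intros x. unfold Rminus; rewrite Rplus_opp_r, Rabs_R0. apply inv_pos.
    - apply NNPP; intro Hn. apply nSg.
      apply (Smax (fun h => S h \/ h = g)); auto.
      intros f h Hf Hh fh.
      assert (Hfar : forall f, S f -> exists x, / (INR k + 1) <= Rabs (proj1_sig f x - proj1_sig g x)).
      { intros f0 Sf0. apply NNPP; intro H1. apply Hn. exists f0; split; auto.
        intro x. apply Rnot_le_lt. intro H2. apply H1. eauto. }
      destruct Hf as [Sf| ->]; destruct Hh as [Sh| ->].
      + apply SS; auto.
      + apply Hfar; auto.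
      + destruct (Hfar h Sh) as [x Hx]. exists x. rewrite Rabs_minus_sym. auto.
      + congruence. }
  set (r := / (2 * (INR k + 1))).
  assert (Hr : 2 * r = / (INR k + 1)).
  { unfold r. pose proof (pos_INR k). field. lra. }
  assert (rpos : 0 < r). { unfold r. pose proof (pos_INR k). apply Rinv_0_lt_compat. lra. }
  set (TS := fun f : CX T => F_ (T := T) (tube (proj1_sig f) r)).
  set (Fk := fun W => exists f, S f /\ W = TS f).
  destruct (Hc Fk) as [e He].
  { intros W [f [Sf ->]]. split.
    - apply basic_open. apply tube_open; auto. apply (proj2_sig f).
    - exists f. intro x. unfold tube; simpl. unfold Rminus; rewrite Rplus_opp_r, Rabs_R0. auto. }
  { intros W V [f [Sf ->]] [g [Sg ->]] WV a [Ha1 Ha2].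
    assert (fg : f <> g). { intro E; apply WV; rewrite E; auto. }
    destruct (SS f g Sf Sg fg) as [x Hx].
    specialize (Ha1 x); specialize (Ha2 x). unfold tube in *; simpl in *.
    pose proof (Rabs_triang (proj1_sig f x - proj1_sig a x) (proj1_sig a x - proj1_sig g x)).
    replace (proj1_sig f x - proj1_sig a x + (proj1_sig a x - proj1_sig g x)) with
      (proj1_sig f x - proj1_sig g x) in H by ring.
    rewrite Rabs_minus_sym in Ha1.
    lra. }
  set (z0 := zeroC T HT).
  exists (fun n => epsilon (inhabits z0) (fun f => S f /\ e n = TS f)).
  intros g. destruct (Hnear g) as [f [Sf Hf]].
  destruct (He (TS f)) as [n Hn]. { exists f; auto. }
  exists n. set (cn := epsilon _ _).
  assert (Hcn : S cn /\ e n = TS cn).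
  { apply (epsilon_spec (inhabits z0) (fun f => S f /\ e n = TS f)). eauto. }
  destruct Hcn as [_ Ecn].
  assert (Hin : TS cn f). { rewrite <- Ecn, Hn. intro x. unfold tube; simpl.
    unfold Rminus; rewrite Rplus_opp_r, Rabs_R0. auto. }
  intro x. specialize (Hin x). specialize (Hf x). unfold tube in Hin; simpl in Hin.
  pose proof (Rabs_triang (proj1_sig cn x - proj1_sig f x) (proj1_sig f x - proj1_sig g x)).
  replace (proj1_sig cn x - proj1_sig f x + (proj1_sig f x - proj1_sig g x)) with
      (proj1_sig cn x - proj1_sig g x) in H by ring.
  rewrite Rabs_minus_sym in Hin.
  assert (2 / (INR k + 1) = 2 * / (INR k + 1)) by (unfold Rdiv; ring).
  pose proof (inv_pos k). lra.
Qed.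

Lemma ccc_dense (Hc : ccc (graph_open T)) :
  exists D : nat -> CX T, forall g : CX T, forall eps, 0 < eps ->
    exists n, forall x, Rabs (proj1_sig (D n) x - proj1_sig g x) < eps.
Proof.
  set (c := fun k => proj1_sig (constructive_indefinite_description _ (ccc_level Hc k))).
  exists (fun m => let (k, n) := Cantor.of_nat m in c k n).
  intros g eps Heps.
  destruct (inv_small (eps / 2)) as [k Hk]. lra.
  destruct (proj2_sig (constructive_indefinite_description _ (ccc_level Hc k)) g) as [n Hn].
  exists (Cantor.to_nat (k, n)). rewrite Cantor.cancel_of_to.
  intro x. specialize (Hn x). fold (c k) in Hn.
  assert (2 / (INR k + 1) = 2 * / (INR k + 1)) by (unfold Rdiv; ring). lra.
Qed.

End D1.

Section D2.
Context {X : Type} (T : (X -> Prop) -> Prop) (HT : tychonoff T)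
  (D : nat -> CX T)
  (HD : forall g : CX T, forall eps, 0 < eps ->
    exists n, forall x, Rabs (proj1_sig (D n) x - proj1_sig g x) < eps).

Let HT0 : is_topology T := proj1 HT.
Let fn n := proj1_sig (D n).

Lemma fn_cont n : continuous_real T (fn n).
Proof. exact (proj2_sig (D n)). Qed.

Lemma base_lemma U x : T U -> U x -> exists n, fn n x < 1/3 /\ forall z, fn n z < 2/3 -> U z.
Proof.
  intros TU Ux. pose proof (proj2 (proj2 HT)) as CR.
  destruct (CR (fun y => ~ U y) x) as [h [hc [hx [hA hb]]]].
  { eapply T_ext; eauto. intro y; split; intro H; [intro H'; auto | apply NNPP; auto]. }
  { auto. }
  destruct (HD (exist _ h hc) (1/3)) as [n Hn]. lra.
  exists n; simpl in Hn. split.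
  - specialize (Hn x). rewrite hx in Hn. unfold fn. pose proof (Rle_abs (proj1_sig (D n) x - 0)). lra.
  - intros z Hz. apply NNPP; intro nU. specialize (hA z nU). specialize (Hn z).
    rewrite hA in Hn. unfold fn in Hz. pose proof (Rabs_minus_sym (proj1_sig (D n) z) 1).
    pose proof (Rle_abs (1 - proj1_sig (D n) z)). lra.
Qed.

Lemma fn_sep x y : x <> y -> exists n, fn n x <> fn n y.
Proof.
  intros xy. pose proof (proj1 (proj2 HT)) as T1H. destruct (T1H x y xy) as [U [TU [Ux nUy]]].
  destruct (base_lemma U x TU Ux) as [n [H1 H2]]. exists n. intro E.
  apply nUy, H2. rewrite <- E. lra.
Qed.

Definition dterm n x y := Rmin 1 (Rabs (fn n x - fn n y)) * / (INR n + 1).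

Lemma dterm_bounds n x y : 0 <= dterm n x y <= / (INR n + 1).
Proof.
  unfold dterm. pose proof (inv_pos n). pose proof (Rabs_pos (fn n x - fn n y)).
  unfold Rmin; destruct Rle_dec; split; nra.
Qed.

Lemma dterm_le_abs n x y : dterm n x y <= Rabs (fn n x - fn n y).
Proof.
  unfold dterm. pose proof (inv_pos n). pose proof (inv_le1 n). pose proof (Rabs_pos (fn n x - fn n y)).
  unfold Rmin; destruct Rle_dec; nra.
Qed.

Lemma dterm_tri n x y z : dterm n x z <= dterm n x y + dterm n y z.
Proof.
  unfold dterm. pose proof (inv_pos n).
  pose proof (Rabs_triang (fn n x - fn n y) (fn n y - fn n z)).
  replace (fn n x - fn n y + (fn n y - fn n z)) with (fn n x - fn n z) in H0 by ring.
  pose proof (Rabs_pos (fn n x - fn n y)). pose proof (Rabs_pos (fn n y - fn n z)).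
  rewrite <- Rmult_plus_distr_r. apply Rmult_le_compat_r. lra.
  unfold Rmin; repeat destruct Rle_dec; lra.
Qed.

Definition dd x y := seqsup (fun n => dterm n x y).

Lemma dterm_le1 n x y : dterm n x y <= 1.
Proof. pose proof (dterm_bounds n x y). pose proof (inv_le1 n). lra. Qed.

Lemma dd_ge n x y : dterm n x y <= dd x y.
Proof. unfold dd. apply (seqsup_ge (fun n => dterm n x y)) with 1. intros; apply dterm_le1. Qed.

Lemma dd_le x y b : (forall n, dterm n x y <= b) -> dd x y <= b.
Proof. intros; unfold dd; apply (seqsup_le (fun n => dterm n x y)) with 1; auto. intros; apply dterm_le1. Qed.

Lemma dd_metric : is_metric dd.
Proof.
  split; [|split; [|split]].
  - intros x y. eapply Rle_trans; [|apply (dd_ge 0)]. apply dterm_bounds.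
  - intros x y; split.
    + intros H. apply NNPP; intro xy. destruct (fn_sep x y xy) as [n Hn].
      pose proof (dd_ge n x y). unfold dterm in H0. rewrite H in H0.
      pose proof (inv_pos n). pose proof (Rabs_pos_lt (fn n x - fn n y)).
      assert (0 < Rmin 1 (Rabs (fn n x - fn n y))).
      { apply Rmin_glb_lt. lra. apply H2. intro E; apply Hn; lra. }
      nra.
    + intros ->. apply Rle_antisym.
      * apply dd_le. intro n. unfold dterm. unfold Rminus; rewrite Rplus_opp_r, Rabs_R0.
        unfold Rmin; destruct Rle_dec; lra.
      * eapply Rle_trans; [|apply (dd_ge 0)]. apply dterm_bounds.
  - intros x y. apply Rle_antisym; apply dd_le; intro n; unfold dterm;
    rewrite Rabs_minus_sym; [apply (dd_ge n y x)|apply (dd_ge n x y)].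
  - intros x y z. apply dd_le. intro n. pose proof (dterm_tri n x y z).
    pose proof (dd_ge n x y). pose proof (dd_ge n y z). lra.
Qed.

Definition Wn x (N : nat) e := fun z => forall n, (n <= N)%nat -> Rabs (fn n z - fn n x) < e.

Lemma Wn_open x N e : T (Wn x N e).
Proof.
  induction N.
  - eapply T_ext. apply (cont_ball T (fn 0) (fn 0 x) e (fn_cont 0)).
    intro z; split. intros H n Hn. replace n with 0%nat by lia. auto. intros H; apply H; lia.
  - eapply T_ext. apply (T_inter T HT0 _ _ IHN (cont_ball T (fn (S N)) (fn (S N) x) e (fn_cont (S N)))).
    intro z; split.
    + intros [H1 H2] n Hn. destruct (Nat.eq_dec n (S N)) as [->|ne]; auto. apply H1; lia.
    + intros H; split. intros n Hn; apply H; lia. apply H; lia.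
Qed.

Lemma Wn_dd x N e z : / (INR N + 1) <= e -> Wn x N e z -> dd x z <= e.
Proof.
  intros He HW. apply dd_le. intro n. destruct (le_lt_dec n N) as [Hn|Hn].
  - specialize (HW n Hn). pose proof (dterm_le_abs n x z). rewrite Rabs_minus_sym in HW. lra.
  - pose proof (dterm_bounds n x z). assert (/ (INR n + 1) <= / (INR N + 1)).
    { apply Rinv_le_contravar. pose proof (pos_INR N); lra. apply le_INR in Hn. rewrite S_INR in Hn. lra. }
    lra.
Qed.

Lemma dd_open_iff U : T U <-> metric_open dd U.
Proof.
  split.
  - intros TU x Ux. destruct (base_lemma U x TU Ux) as [n [H1 H2]].
    exists (/ 3 * / (INR n + 1)). split. pose proof (inv_pos n). lra.
    intros y Hy. apply H2. pose proof (dd_ge n x y). unfold dterm in H.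
    pose proof (inv_pos n).
    assert (Rmin 1 (Rabs (fn n x - fn n y)) < / 3) by nra.
    revert H3. unfold Rmin; destruct Rle_dec; intro H3; try lra.
    pose proof (Rle_abs (fn n y - fn n x)). rewrite Rabs_minus_sym in H4. lra.
  - intros MU. eapply T_ext.
    apply (T_union T HT0 (fun V => exists x N e, U x /\ V = Wn x N e /\ forall z, V z -> U z)).
    { intros V [x [N [e [_ [-> _]]]]]. apply Wn_open. }
    intro z; split.
    + intros [V [[x [N [e [_ [_ H]]]]] Vz]]. auto.
    + intros Uz. destruct (MU z Uz) as [e [He Hsub]].
      destruct (inv_small (e/2)) as [N HN]. lra.
      exists (Wn z N (e/2)). split.
      * exists z, N, (e/2). repeat split; auto. intros w Hw. apply Hsub.
        pose proof (Wn_dd z N (e/2) w (Rlt_le _ _ HN) Hw). lra.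
      * intros n _. unfold Rminus; rewrite Rplus_opp_r, Rabs_R0. lra.
Qed.

Lemma dense_metrizable : metrizable T.
Proof. exists dd. split. apply dd_metric. apply dd_open_iff. Qed.

End D2.

Definition kfun {X : Type} (m : X -> nat) (p : nat -> X) : nat -> nat :=
  fix k N := match N with 0%nat => 0%nat | S N' => Nat.max (S (k N')) (m (p (k N'))) end.

Definition wfun (rho : nat -> R) : nat -> R :=
  fix w n := match n with 0%nat => 1 | S n' => Rmin (w n') (rho n' / 2) end.

Lemma wfun_pos rho : (forall n, 0 < rho n) -> forall n, 0 < wfun rho n.
Proof.
  intros H n; induction n; simpl. lra.
  apply Rmin_glb_lt; auto. specialize (H n); lra.
Qed.

Lemma wfun_le rho : forall n N, (N < n)%nat -> wfun rho n <= rho N / 2.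
Proof.
  induction n; intros N HN. lia. simpl.
  destruct (Nat.eq_dec N n) as [->|ne].
  - apply Rmin_r.
  - eapply Rle_trans. apply Rmin_l. apply IHn. lia.
Qed.

Section LipCont.
Context {X : Type} (T : (X -> Prop) -> Prop) (d : X -> X -> R)
  (Hd : forall U, T U <-> metric_open d U) (Hdp : forall x y, 0 <= d x y).

Lemma lip_cont (g : X -> R) (K : R) : 0 <= K -> (forall x y, Rabs (g x - g y) <= K * d x y) ->
  continuous_real T g.
Proof.
  intros HK Hg U HU. apply Hd. intros x Ux. destruct (HU (g x) Ux) as [e [He Hs]].
  exists (e / (K + 1)). split. apply Rdiv_lt_0_compat; lra.
  intros y Hy. apply Hs. rewrite Rabs_minus_sym. eapply Rle_lt_trans. apply Hg.
  pose proof (Hdp x y).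
  assert (e / (K + 1) * (K + 1) = e) by (field; lra).
  nra.
Qed.
End LipCont.

Section D4.
Context {X : Type} (T : (X -> Prop) -> Prop) (HT0 : is_topology T)
  (d : X -> X -> R) (Hm : is_metric d) (Hd : forall U, T U <-> metric_open d U)
  (Bs : nat -> X -> Prop)
  (Hbase : forall U x, T U -> U x -> exists n, Bs n x /\ forall z, Bs n z -> U z)
  (Hc : ccc (graph_open T)).

Lemma d_pos x y : 0 <= d x y.
Proof. apply (proj1 Hm). Qed.
Lemma d_refl x : d x x = 0.
Proof. apply (proj1 (proj2 Hm)). auto. Qed.
Lemma d_sym x y : d x y = d y x.
Proof. apply (proj1 (proj2 (proj2 Hm))). Qed.
Lemma d_tri x y z : d x z <= d x y + d y z.
Proof. apply (proj2 (proj2 (proj2 Hm))). Qed.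
Lemma d_neq x y : x <> y -> 0 < d x y.
Proof.
  intros H. destruct (Rle_lt_dec (d x y) 0); auto. exfalso. apply H.
  apply (proj1 (proj2 Hm)). pose proof (d_pos x y). lra.
Qed.

Section Seq.
Variable Vs : nat -> X -> Prop.
Hypothesis Vs_open : forall N, T (Vs N).
Hypothesis Vs_mono : forall a b x, (a <= b)%nat -> Vs a x -> Vs b x.
Variable m : X -> nat.
Hypothesis Hm_in : forall x, Vs (m x) x.
Variable p : nat -> X.
Hypothesis Hp_out : forall N, ~ Vs N (p N).

Let k := kfun m p.
Let xs N := p (k N).

Lemma k_S N : (k N < k (S N))%nat.
Proof. change (k (S N)) with (Nat.max (S (k N)) (m (p (k N)))). lia. Qed.
Lemma k_mono N M : (N <= M)%nat -> (k N <= k M)%nat.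
Proof. intros H; induction H. apply le_n. pose proof (k_S m0). lia. Qed.
Lemma k_ge N : (N <= k N)%nat.
Proof. induction N. lia. pose proof (k_S N). lia. Qed.
Lemma xs_in N : Vs (k (S N)) (xs N).
Proof. apply Vs_mono with (m (xs N)). change (k (S N)) with (Nat.max (S (k N)) (m (p (k N)))). unfold xs. lia. apply Hm_in. Qed.
Lemma xs_out n N : (n <= N)%nat -> ~ Vs (k n) (xs N).
Proof. intros H H'. apply (Hp_out (k N)). apply Vs_mono with (k n); auto. apply k_mono; auto. Qed.
Lemma xs_neq M N : (M < N)%nat -> xs M <> xs N.
Proof.
  intros H E. apply (xs_out N N). lia. rewrite <- E.
  apply Vs_mono with (k (S M)). apply k_mono; lia. apply xs_in.
Qed.

Lemma rho_ex N : exists r, 0 < r /\ r <= 1 /\ forall M, M <> N -> r <= d (xs N) (xs M).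
Proof.
  destruct (proj1 (Hd _) (Vs_open (k (S N))) (xs N) (xs_in N)) as [e [He Hball]].
  assert (Hfin : forall K, (K <= N)%nat -> exists r, 0 < r /\ forall M, (M < K)%nat -> r <= d (xs N) (xs M)).
  { induction K; intros HK.
    - exists 1. split. lra. intros; lia.
    - destruct IHK as [r [Hr HrM]]. lia.
      exists (Rmin r (d (xs N) (xs K))). split.
      + apply Rmin_glb_lt; auto. apply d_neq. intro E. apply (xs_neq K N). lia. auto.
      + intros M HM. destruct (Nat.eq_dec M K) as [->|ne]. apply Rmin_r.
        eapply Rle_trans. apply Rmin_l. apply HrM. lia. }
  destruct (Hfin N (le_n N)) as [r [Hr HrM]].
  exists (Rmin 1 (Rmin e r)). split. repeat apply Rmin_glb_lt; lra.
  split. apply Rmin_l.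
  intros M HMN. destruct (Nat.lt_ge_cases M N) as [HMN'|HMN'].
  - eapply Rle_trans. apply Rmin_r. eapply Rle_trans. apply Rmin_r. auto.
  - eapply Rle_trans. apply Rmin_r. eapply Rle_trans. apply Rmin_l.
    apply Rnot_lt_le. intro Hlt. apply (xs_out (S N) M). lia. apply Hball. auto.
Qed.

Let rho N := proj1_sig (constructive_indefinite_description _ (rho_ex N)).
Lemma rho_spec N : 0 < rho N /\ rho N <= 1 /\ forall M, M <> N -> rho N <= d (xs N) (xs M).
Proof. exact (proj2_sig (constructive_indefinite_description _ (rho_ex N))). Qed.

Let w := wfun rho.

Definition Gs (h : X -> R) : X * R -> Prop :=
  fun q => exists n, Vs (k n) (fst q) /\ Rabs (snd q - h (fst q)) < w n.

Lemma Gs_open h : continuous_real T h -> prod_open T (Gs h).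
Proof.
  intros Hh x y [n [Hx Hy]]. simpl in *.
  destruct (tube_open T h (w n) Hh x y Hy) as [U [e [TU [Ux [He HUe]]]]].
  exists (fun x' => Vs (k n) x' /\ U x'), e. split. apply T_inter; auto.
  split. auto. split. auto. intros x' y' [H1 H2] H3. exists n. split; auto. apply (HUe x' y' H2 H3).
Qed.

Definition term (s : nat -> bool) x M := if s M then 1 else Rmin 1 (d x (xs M)).
Definition hfun (s : nat -> bool) x := - seqsup (fun M => - term s x M).

Lemma term_bounds s x M : 0 <= term s x M <= 1.
Proof. unfold term. destruct (s M). lra. pose proof (d_pos x (xs M)). unfold Rmin; destruct Rle_dec; lra. Qed.

Lemma hfun_lip s x y : Rabs (hfun s x - hfun s y) <= 1 * d x y.
Proof.
  assert (H : forall x y, seqsup (fun M => - term s y M) <= seqsup (fun M => - term s x M) + d x y).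
  { intros a b. apply seqsup_le with 0. intro n; pose proof (term_bounds s b n); lra.
    intro n. assert (term s a n <= term s b n + d a b).
    { unfold term. destruct (s n). pose proof (d_pos a b); lra.
      pose proof (d_tri a b (xs n)). pose proof (d_pos a b). pose proof (d_pos b (xs n)).
      unfold Rmin; repeat destruct Rle_dec; lra. }
    pose proof (seqsup_ge (fun M => - term s a M) 0 n). simpl in H0.
    assert (- term s a n <= seqsup (fun M => - term s a M)).
    { apply H0. intro; pose proof (term_bounds s a n0); lra. }
    lra. }
  unfold hfun. pose proof (H x y). pose proof (H y x). rewrite (d_sym y x) in H1.
  apply Rabs_le. lra.
Qed.

Lemma hfun_cont s : continuous_real T (hfun s).
Proof. apply (lip_cont T d Hd d_pos (hfun s) 1). lra. apply hfun_lip. Qed.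

Definition hs (s : nat -> bool) : CX T := exist _ (hfun s) (hfun_cont s).

Lemma hfun_false s N : s N = false -> hfun s (xs N) <= 0.
Proof.
  intros H. unfold hfun. assert (- term s (xs N) N <= seqsup (fun M => - term s (xs N) M)).
  { apply (seqsup_ge (fun M => - term s (xs N) M) 0). intro; pose proof (term_bounds s (xs N) n); lra. }
  unfold term at 1 in H0. rewrite H, d_refl in H0. unfold Rmin at 1 in H0; destruct Rle_dec; lra.
Qed.

Lemma hfun_true s N : s N = true -> rho N <= hfun s (xs N).
Proof.
  intros H. unfold hfun. destruct (rho_spec N) as [r0 [r1 r2]].
  assert (seqsup (fun M => - term s (xs N) M) <= - rho N).
  { apply seqsup_le with 0. intro; pose proof (term_bounds s (xs N) n); lra.
    intro M. unfold term. destruct (s M) eqn:E. lra.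
    assert (M <> N) by (intro; subst; congruence). specialize (r2 M H0).
    unfold Rmin; destruct Rle_dec; lra. }
  lra.
Qed.

Lemma hs_in s : F_ (T := T) (Gs (hfun s)) (hs s).
Proof.
  intro x. exists (m x). simpl. split. apply Vs_mono with (m x). apply k_ge. apply Hm_in.
  unfold Rminus; rewrite Rplus_opp_r, Rabs_R0. apply wfun_pos. intro; apply rho_spec.
Qed.

Lemma common_eq s s' (g : CX T) : F_ (T := T) (Gs (hfun s)) g -> F_ (T := T) (Gs (hfun s')) g ->
  forall N, s N = s' N.
Proof.
  intros H1 H2 N. apply NNPP; intro ne.
  destruct (H1 (xs N)) as [n [Hn1 Hn2]]. destruct (H2 (xs N)) as [n' [Hn1' Hn2']]. simpl in *.
  assert (N < n)%nat. { destruct (Nat.lt_ge_cases N n); auto. exfalso; apply (xs_out n N); auto. }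
  assert (N < n')%nat. { destruct (Nat.lt_ge_cases N n'); auto. exfalso; apply (xs_out n' N); auto. }
  pose proof (wfun_le rho n N H). pose proof (wfun_le rho n' N H0). fold w in H3, H4.
  assert (Rabs (hfun s (xs N) - hfun s' (xs N)) < rho N).
  { pose proof (Rabs_triang (hfun s (xs N) - proj1_sig g (xs N)) (proj1_sig g (xs N) - hfun s' (xs N))).
    replace (hfun s (xs N) - proj1_sig g (xs N) + (proj1_sig g (xs N) - hfun s' (xs N))) with
      (hfun s (xs N) - hfun s' (xs N)) in H5 by ring.
    rewrite (Rabs_minus_sym (hfun s (xs N)) (proj1_sig g (xs N))) in H5. lra. }
  destruct (s N) eqn:E1; destruct (s' N) eqn:E2; try congruence.
  - pose proof (hfun_true s N E1). pose proof (hfun_false s' N E2).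
    pose proof (Rle_abs (hfun s (xs N) - hfun s' (xs N))). lra.
  - pose proof (hfun_true s' N E2). pose proof (hfun_false s N E1).
    pose proof (Rabs_minus_sym (hfun s (xs N)) (hfun s' (xs N))).
    pose proof (Rle_abs (hfun s' (xs N) - hfun s (xs N))). lra.
Qed.

Lemma seq_contra : False.
Proof.
  set (Fam := fun W => exists s, W = F_ (T := T) (Gs (hfun s))).
  destruct (Hc Fam) as [e He].
  { intros W [s ->]. split. apply basic_open. apply Gs_open. apply hfun_cont.
    exists (hs s). apply hs_in. }
  { intros W V [s ->] [s' ->] WV a [Ha1 Ha2]. apply WV.
    assert (s = s'). { apply functional_extensionality. apply (common_eq s s' a); auto. }
    subst; auto. }
  set (sn := fun n => epsilon (inhabits (fun _ : nat => false)) (fun s => e n = F_ (T := T) (Gs (hfun s)))).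
  set (t := fun n => negb (sn n n)).
  destruct (He (F_ (T := T) (Gs (hfun t)))) as [n Hn]. { exists t; auto. }
  assert (Hsn : e n = F_ (T := T) (Gs (hfun (sn n)))).
  { apply (epsilon_spec (inhabits (fun _ : nat => false)) (fun s => e n = F_ (T := T) (Gs (hfun s)))).
    exists t; auto. }
  assert (H2 : F_ (T := T) (Gs (hfun (sn n))) (hs t)). { rewrite <- Hsn, Hn. apply hs_in. }
  pose proof (common_eq t (sn n) (hs t) (hs_in t) H2 n).
  unfold t in H. destruct (sn n n); simpl in H; congruence.
Qed.
End Seq.

Lemma ccc_compact : compact_space T.
Proof.
  intros C HCo Hcov.
  destruct (classic (exists x0 : X, True)) as [[x0 _]|nX].
  2:{ exists nil. split. intros U []. intro x. exfalso; apply nX; eauto. }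
  apply NNPP; intro Hnf.
  destruct (Hcov x0) as [V0 [CV0 _]].
  set (P := fun n V => C V /\ ((forall z, Bs n z -> V z) \/ ~ exists W, C W /\ forall z, Bs n z -> W z)).
  set (U := fun n => epsilon (inhabits V0) (P n)).
  assert (HU : forall n, P n (U n)).
  { intro n. apply (epsilon_spec (inhabits V0) (P n)).
    destruct (classic (exists W, C W /\ forall z, Bs n z -> W z)) as [[W HW]|nW].
    - exists W. split; tauto.
    - exists V0. split; tauto. }
  assert (Ucov : forall x, exists n, U n x).
  { intro x. destruct (Hcov x) as [V [CV Vx]]. destruct (Hbase V x (HCo V CV) Vx) as [n [Bx Bsub]].
    exists n. destruct (HU n) as [_ [Hs|nW]]. auto. exfalso; apply nW; eauto. }
  set (Vs := fun N x => exists n, (n <= N)%nat /\ U n x).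
  assert (Vs_open : forall N, T (Vs N)).
  { intro N. eapply T_ext.
    apply (T_union T HT0 (fun W => exists n, (n <= N)%nat /\ W = U n)).
    { intros W [n [_ ->]]. apply HCo. apply (HU n). }
    intro x; split. intros [W [[n [Hn ->]] Wx]]. exists n; auto.
    intros [n [Hn Ux]]. exists (U n). eauto. }
  assert (Vs_mono : forall a b x, (a <= b)%nat -> Vs a x -> Vs b x).
  { intros a b x Hab [n [Hn Ux]]. exists n. split; auto. lia. }
  assert (Vcov : forall x, exists N, Vs N x).
  { intro x. destruct (Ucov x) as [n Hn]. exists n, n. auto. }
  assert (Vnf : forall N, exists x, ~ Vs N x).
  { intro N. apply NNPP; intro H. apply Hnf.
    exists (map U (seq 0 (S N))). split.
    - intros W HW. apply in_map_iff in HW. destruct HW as [n [<- _]]. apply (HU n).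
    - intro x. destruct (classic (Vs N x)) as [[n [Hn Ux]]|nV].
      + exists (U n). split; auto. apply in_map. apply in_seq. lia.
      + exfalso. apply H. eauto. }
  set (m := fun x => epsilon (inhabits 0%nat) (fun N => Vs N x)).
  set (p := fun N => epsilon (inhabits x0) (fun x => ~ Vs N x)).
  assert (Hmin : forall x, Vs (m x) x).
  { intro x. apply (epsilon_spec (inhabits 0%nat) (fun N => Vs N x)). auto. }
  assert (Hpout : forall N, ~ Vs N (p N)).
  { intro N. apply (epsilon_spec (inhabits x0) (fun x => ~ Vs N x)). auto. }
  exact (seq_contra Vs Vs_open Vs_mono m Hmin p Hpout).
Qed.

End D4.

Lemma absle x a : Rabs x <= a -> -a <= x /\ x <= a.
Proof. unfold Rabs; destruct Rcase_abs; intros; split; lra. Qed.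
Lemma abslt x a : Rabs x < a -> -a < x /\ x < a.
Proof. unfold Rabs; destruct Rcase_abs; intros; split; lra. Qed.
Lemma leabs x a : -a <= x -> x <= a -> Rabs x <= a.
Proof. unfold Rabs; destruct Rcase_abs; intros; lra. Qed.
Lemma ltabs x a : -a < x -> x < a -> Rabs x < a.
Proof. unfold Rabs; destruct Rcase_abs; intros; lra. Qed.

Section Comp.
Context {X : Type} (T : (X -> Prop) -> Prop) (HT0 : is_topology T) (Hcomp : compact_space T).

Lemma compact_unif (P : (X -> Prop) -> R -> Prop) :
  (forall x, exists U r, T U /\ U x /\ 0 < r /\ P U r) ->
  exists eps, 0 < eps /\ forall z, exists U r, U z /\ eps <= r /\ P U r.
Proof.
  intros H.
  destruct (Hcomp (fun U => T U /\ exists r, 0 < r /\ P U r)) as [l [Hl Hcov]].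
  { intros U [TU _]; auto. }
  { intros x. destruct (H x) as [U [r [TU [Ux [rp PU]]]]]. exists U. split; eauto. }
  assert (Hind : forall l : list (X -> Prop), (forall U, In U l -> T U /\ exists r, 0 < r /\ P U r) ->
            exists eps, 0 < eps /\ forall U, In U l -> exists r, eps <= r /\ P U r).
  { induction l0 as [|U l0 IH]; intros Hl0.
    - exists 1. split. lra. intros U [].
    - destruct IH as [e [He HU]]. { intros V HV; apply Hl0; right; auto. }
      destruct (Hl0 U (or_introl eq_refl)) as [_ [r [rp PU]]].
      exists (Rmin e r). split. apply Rmin_glb_lt; auto.
      intros V [<-|HV].
      + exists r. split. apply Rmin_r. auto.
      + destruct (HU V HV) as [r' [Hr' PV]]. exists r'. split; auto. eapply Rle_trans. apply Rmin_l. auto. }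
  destruct (Hind l Hl) as [e [He HU]]. exists e. split; auto.
  intro z. destruct (Hcov z) as [U [HUl Uz]]. destruct (HU U HUl) as [r [Hr PU]]. eauto.
Qed.

Lemma tube_in (f : X -> R) (G : X * R -> Prop) : continuous_real T f -> prod_open T G ->
  (forall x, G (x, f x)) -> exists eps, 0 < eps /\ forall x y, Rabs (y - f x) < eps -> G (x, y).
Proof.
  intros Hf HG Hgr.
  destruct (compact_unif (fun U r => forall x', U x' -> forall y, Rabs (y - f x') < r -> G (x', y))) as [e [He Hz]].
  { intros x. destruct (HG x (f x) (Hgr x)) as [U0 [e [TU0 [U0x [He HUe]]]]].
    exists (fun x' => U0 x' /\ Rabs (f x' - f x) < e / 2), (e / 2). split.
    apply T_inter; auto. apply cont_ball; auto.
    split. split; auto. unfold Rminus; rewrite Rplus_opp_r, Rabs_R0; lra.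
    split. lra.
    intros x' [H1 H2] y Hy. apply HUe; auto.
    apply abslt in H2; apply abslt in Hy. apply ltabs; lra. }
  exists e; split; auto. intros x y Hy. destruct (Hz x) as [U [r [Ux [Hr PU]]]].
  apply PU; auto. lra.
Qed.

Context (d : X -> X -> R) (Hm : is_metric d) (Hd : forall U, T U <-> metric_open d U).

Lemma ball_open x r : T (fun y => d x y < r).
Proof.
  apply Hd. intros y Hy. exists (r - d x y). split. lra.
  intros z Hz. pose proof (d_tri d Hm x y z). lra.
Qed.

Lemma cont_metric (f : X -> R) : continuous_real T f ->
  forall x e, 0 < e -> exists del, 0 < del /\ forall y, d x y < del -> Rabs (f y - f x) < e.
Proof.
  intros Hf x e He. destruct (proj1 (Hd _) (cont_ball T f (f x) e Hf) x) as [del [Hdel H]].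
  unfold Rminus; rewrite Rplus_opp_r, Rabs_R0; auto. eauto.
Qed.

Lemma cont_bound (f : X -> R) : continuous_real T f -> exists M, 0 < M /\ forall x, Rabs (f x) <= M.
Proof.
  intros Hf.
  destruct (compact_unif (fun U r => forall x', U x' -> Rabs (f x') <= / r)) as [e [He Hz]].
  { intros x. exists (fun x' => Rabs (f x' - f x) < 1), (/ (Rabs (f x) + 1)).
    pose proof (Rabs_pos (f x)).
    split. apply cont_ball; auto. split. unfold Rminus; rewrite Rplus_opp_r, Rabs_R0; lra.
    split. apply Rinv_0_lt_compat; lra.
    intros x' Hx'. rewrite Rinv_inv. pose proof (Rabs_triang (f x' - f x) (f x)).
    replace (f x' - f x + f x) with (f x') in H0 by ring. lra. }
  exists (/ e). split. apply Rinv_0_lt_compat; auto.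
  intro x. destruct (Hz x) as [U [r [Ux [Hr PU]]]]. eapply Rle_trans. apply PU; auto.
  apply Rinv_le_contravar; auto.
Qed.

Lemma unif_cont (f : X -> R) : continuous_real T f ->
  forall e, 0 < e -> exists del, 0 < del /\ forall y z, d y z < del -> Rabs (f y - f z) < e.
Proof.
  intros Hf e He.
  destruct (compact_unif (fun U r => forall a b, U a -> d a b < r -> Rabs (f a - f b) < e)) as [del [Hdel Hz]].
  { intros x. destruct (cont_metric f Hf x (e/2)) as [d0 [Hd0 Hc]]. lra.
    exists (fun y => d x y < d0 / 2), (d0 / 2). split. apply ball_open.
    split. rewrite (d_refl d Hm). lra. split. lra.
    intros a b Ha Hb. pose proof (d_tri d Hm x a b).
    pose proof (Hc a ltac:(lra)). pose proof (Hc b ltac:(lra)).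
    apply abslt in H0; apply abslt in H1. apply ltabs; lra. }
  exists del. split; auto. intros y z Hyz. destruct (Hz y) as [U [r [Uy [Hr PU]]]].
  apply PU; auto. lra.
Qed.

Lemma nets r : 0 < r -> exists l : list X, forall z, exists a, In a l /\ d a z < r.
Proof.
  intros Hr.
  destruct (Hcomp (fun U => exists a, U = fun z => d a z < r)) as [lU [HlU Hcov]].
  { intros U [a ->]. apply ball_open. }
  { intros x. exists (fun z => d x z < r). split. eauto. rewrite (d_refl d Hm). auto. }
  assert (Hind : forall lU : list (X -> Prop), (forall U, In U lU -> exists a, U = fun z => d a z < r) ->
     exists la, forall U, In U lU -> exists a, In a la /\ U = fun z => d a z < r).
  { induction lU0 as [|U lU0 IH]; intros H.
    - exists nil. intros U [].
    - destruct IH as [la Hla]. { intros; apply H; right; auto. }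
      destruct (H U (or_introl eq_refl)) as [a Ha]. exists (a :: la).
      intros V [<-|HV]. exists a; split; auto. left; auto.
      destruct (Hla V HV) as [b [Hb ->]]. exists b; split; auto. right; auto. }
  destruct (Hind lU HlU) as [la Hla]. exists la. intro z.
  destruct (Hcov z) as [U [HU Uz]]. destruct (Hla U HU) as [a [Ha ->]]. eauto.
Qed.

End Comp.

Fixpoint dec (fuel n : nat) : list nat :=
  match fuel with
  | O => nil
  | S f => match n with O => nil | S m => let (a, b) := Cantor.of_nat m in a :: dec f b end
  end.

Fixpoint enc (l : list nat) : nat :=
  match l with nil => O | a :: t => S (Cantor.to_nat (a, enc t)) end.

Lemma enc_ge l : (length l <= enc l)%nat.
Proof.
  induction l; simpl. lia. pose proof (Cantor.to_nat_non_decreasing a (enc l)). lia.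
Qed.

Lemma dec_enc l f : (length l <= f)%nat -> dec f (enc l) = l.
Proof.
  revert f; induction l; intros f Hf; destruct f; cbn [dec enc length] in *; auto; try lia.
  rewrite Cantor.cancel_of_to. rewrite IHl; auto. lia.
Qed.

Lemma dec_surj l : dec (enc l) (enc l) = l.
Proof. apply dec_enc, enc_ge. Qed.

Definition mn (b : R) (l : list R) : R := fold_right Rmin b l.

Lemma mn_le_b b l : mn b l <= b.
Proof. induction l; simpl. lra. eapply Rle_trans. apply Rmin_r. auto. Qed.
Lemma mn_le_in b l v : In v l -> mn b l <= v.
Proof. induction l; simpl. intros []. intros [->|H]. apply Rmin_l. eapply Rle_trans. apply Rmin_r. auto. Qed.
Lemma mn_ge b l c : c <= b -> (forall v, In v l -> c <= v) -> c <= mn b l.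
Proof.
  intros Hb Hl. induction l; simpl; auto. apply Rmin_glb. apply Hl; left; auto.
  apply IHl. intros; apply Hl; right; auto.
Qed.

Lemma Rmin_lip a b a' b' K : Rabs (a - a') <= K -> Rabs (b - b') <= K -> Rabs (Rmin a b - Rmin a' b') <= K.
Proof.
  intros H1 H2. apply absle in H1. apply absle in H2.
  unfold Rmin; repeat destruct Rle_dec; apply leabs; lra.
Qed.

Lemma mn_lip {A B : Type} (phi : A -> B -> R) (x y : B) K q0 (rest : list A) :
  (forall q, Rabs (phi q x - phi q y) <= K) ->
  Rabs (mn (phi q0 x) (map (fun q => phi q x) rest) - mn (phi q0 y) (map (fun q => phi q y) rest)) <= K.
Proof.
  intros H. induction rest; simpl. auto. apply Rmin_lip; auto.
Qed.

Lemma floor_ex (v : R) : exists z : Z, IZR z <= v < IZR z + 1.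
Proof.
  destruct (archimed v) as [H1 H2]. exists (up v - 1)%Z. rewrite minus_IZR. simpl. lra.
Qed.

Lemma nat_Z z : INR (Z.to_nat z) - INR (Z.to_nat (- z)) = IZR z.
Proof. rewrite !INR_IZR_INZ, <- minus_IZR. f_equal. lia. Qed.

Section Approx.
Context {X : Type} (T : (X -> Prop) -> Prop) (HT0 : is_topology T) (Hcomp : compact_space T)
  (d : X -> X -> R) (Hm : is_metric d) (Hd : forall U, T U <-> metric_open d U).

Definition net (k : nat) : list X :=
  epsilon (inhabits nil) (fun l => forall z, exists a, In a l /\ d a z < / (INR k + 1)).

Lemma net_spec k z : exists a, In a (net k) /\ d a z < / (INR k + 1).
Proof.
  unfold net. revert z. apply (epsilon_spec (inhabits nil) (fun l => forall z, exists a, In a l /\ d a z < / (INR k + 1))).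
  apply (nets T Hcomp d Hm Hd). apply inv_pos.
Qed.

Definition valk (k c : nat) : R :=
  (INR (fst (Cantor.of_nat c)) - INR (snd (Cantor.of_nat c))) / (INR k + 1).

Definition tm (k L : nat) (q : X * nat) (x : X) : R := valk k (snd q) + INR L * d x (fst q).

Definition gfun (k L : nat) (cs : list nat) (x : X) : R :=
  match combine (net k) cs with
  | nil => 0
  | q0 :: rest => mn (tm k L q0 x) (map (fun q => tm k L q x) rest)
  end.

Lemma dist_lip x y a : Rabs (d x a - d y a) <= d x y.
Proof.
  pose proof (d_tri d Hm x y a). pose proof (d_tri d Hm y x a). rewrite (d_sym d Hm y x) in H0.
  apply leabs; lra.
Qed.

Lemma gfun_lip k L cs x y : Rabs (gfun k L cs x - gfun k L cs y) <= INR L * d x y.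
Proof.
  unfold gfun. destruct (combine (net k) cs) as [|q0 rest].
  - unfold Rminus; rewrite Rplus_opp_r, Rabs_R0. pose proof (pos_INR L). pose proof (d_pos d Hm x y). nra.
  - apply (mn_lip (tm k L)). intro q. unfold tm.
    replace (valk k (snd q) + INR L * d x (fst q) - (valk k (snd q) + INR L * d y (fst q))) with
      (INR L * (d x (fst q) - d y (fst q))) by ring.
    rewrite Rabs_mult, Rabs_right by (apply Rle_ge, pos_INR).
    apply Rmult_le_compat_l. apply pos_INR. apply dist_lip.
Qed.

Lemma gfun_cont k L cs : continuous_real T (gfun k L cs).
Proof. apply (lip_cont T d Hd (d_pos d Hm) _ (INR L)). apply pos_INR. apply gfun_lip. Qed.

Lemma combine_map (l : list X) (h : X -> nat) : combine l (map h l) = map (fun a => (a, h a)) l.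
Proof. induction l; simpl; f_equal; auto. Qed.

Lemma approx (f : X -> R) : continuous_real T f -> forall eps, 0 < eps ->
  exists k L cs, forall x, Rabs (gfun k L cs x - f x) < eps.
Proof.
  intros Hf eps He.
  destruct (cont_bound T Hcomp f Hf) as [M [HM HMb]].
  destruct (unif_cont T Hcomp d Hm Hd f Hf (eps / 4)) as [del [Hdel Hu]]. lra.
  destruct (nat_gt ((2 * M + 1) / del)) as [L HL].
  assert (HL' : 2 * M + 1 < INR L * del).
  { apply Rmult_lt_compat_r with (r := del) in HL; auto. unfold Rdiv in HL.
    rewrite Rmult_assoc, Rinv_l, Rmult_1_r in HL; lra. }
  pose proof (pos_INR L).
  destruct (inv_small (Rmin del (Rmin (eps / (4 * (INR L + 1))) (eps / 4)))) as [k Hk].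
  { apply Rmin_glb_lt; auto. apply Rmin_glb_lt. apply Rdiv_lt_0_compat; lra. lra. }
  set (r := / (INR k + 1)) in *.
  assert (Hr1 : r < del). { eapply Rlt_le_trans. apply Hk. apply Rmin_l. }
  assert (Hr2 : r < eps / (4 * (INR L + 1))). { eapply Rlt_le_trans. apply Hk. eapply Rle_trans. apply Rmin_r. apply Rmin_l. }
  assert (Hr3 : r < eps / 4). { eapply Rlt_le_trans. apply Hk. eapply Rle_trans. apply Rmin_r. apply Rmin_r. }
  assert (Hr0 : 0 < r) by apply inv_pos.
  assert (HLr : INR L * r <= eps / 4).
  { assert (INR L * r <= (INR L + 1) * r) by nra.
    assert ((INR L + 1) * r < (INR L + 1) * (eps / (4 * (INR L + 1)))) by (apply Rmult_lt_compat_l; lra).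
    replace ((INR L + 1) * (eps / (4 * (INR L + 1)))) with (eps / 4) in H1 by (field; lra). lra. }
  set (zf := fun a => proj1_sig (constructive_indefinite_description _ (floor_ex ((INR k + 1) * f a)))).
  assert (Hzf : forall a, IZR (zf a) <= (INR k + 1) * f a < IZR (zf a) + 1).
  { intro a. exact (proj2_sig (constructive_indefinite_description _ (floor_ex ((INR k + 1) * f a)))). }
  set (cf := fun a => Cantor.to_nat (Z.to_nat (zf a), Z.to_nat (- zf a))).
  assert (Hval : forall a, f a - r < valk k (cf a) <= f a).
  { intro a. unfold valk, cf. rewrite Cantor.cancel_of_to. simpl. rewrite nat_Z.
    specialize (Hzf a). pose proof (pos_INR k).
    assert (IZR (zf a) / (INR k + 1) <= f a).
    { apply Rmult_le_reg_l with (INR k + 1). lra. replace ((INR k + 1) * (IZR (zf a) / (INR k + 1))) with (IZR (zf a)) by (field; lra). lra. }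
    assert (f a - r < IZR (zf a) / (INR k + 1)).
    { apply Rmult_lt_reg_l with (INR k + 1). lra.
      replace ((INR k + 1) * (IZR (zf a) / (INR k + 1))) with (IZR (zf a)) by (field; lra).
      replace ((INR k + 1) * (f a - r)) with ((INR k + 1) * f a - 1) by (unfold r; field; lra). lra. }
    lra. }
  exists k, L, (map cf (net k)).
  intro x. unfold gfun. rewrite combine_map.
  destruct (net_spec k x) as [a [Ha Hax]]. fold r in Hax.
  assert (Hin : In (a, cf a) (map (fun a => (a, cf a)) (net k))).
  { apply in_map_iff. eauto. }
  assert (Hlow : forall q, In q (map (fun a => (a, cf a)) (net k)) -> f x - eps / 2 <= tm k L q x).
  { intros q Hq. apply in_map_iff in Hq. destruct Hq as [b [<- Hb]]. unfold tm; simpl.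
    specialize (Hval b). pose proof (d_pos d Hm x b) as Hdp.
    destruct (Rlt_le_dec (d x b) del) as [Hxb|Hxb].
    - pose proof (Hu x b Hxb) as Hub. apply abslt in Hub. nra.
    - pose proof (HMb x) as Mx. pose proof (HMb b) as Mb. apply absle in Mx; apply absle in Mb.
      assert (r <= 1). { unfold r. apply inv_le1. }
      assert (INR L * del <= INR L * d x b) by (apply Rmult_le_compat_l; lra). lra. }
  destruct (map (fun a => (a, cf a)) (net k)) as [|q0 rest] eqn:E. destruct Hin.
  assert (Hup : mn (tm k L q0 x) (map (fun q => tm k L q x) rest) <= tm k L (a, cf a) x).
  { destruct Hin as [<-|Hin]. apply mn_le_b. apply mn_le_in. apply in_map_iff. eauto. }
  assert (Hlo : f x - eps / 2 <= mn (tm k L q0 x) (map (fun q => tm k L q x) rest)).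
  { apply mn_ge. apply Hlow; left; auto. intros v Hv. apply in_map_iff in Hv.
    destruct Hv as [q [<- Hq]]. apply Hlow; right; auto. }
  assert (Htm : tm k L (a, cf a) x = valk k (cf a) + INR L * d a x)
    by (unfold tm; simpl; rewrite (d_sym d Hm x a); auto).
  rewrite Htm in Hup.
  pose proof (Hu a x (Rlt_trans _ _ _ Hax Hr1)) as Hua. apply abslt in Hua.
  specialize (Hval a).
  assert (INR L * d a x <= INR L * r) by (apply Rmult_le_compat_l; lra).
  apply ltabs; lra.
Qed.

Definition Dfun (n : nat) : X -> R :=
  let (k, r) := Cantor.of_nat n in let (L, c) := Cantor.of_nat r in gfun k L (dec c c).

Lemma Dfun_cont n : continuous_real T (Dfun n).
Proof. unfold Dfun. destruct (Cantor.of_nat n). destruct (Cantor.of_nat n1). apply gfun_cont. Qed.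

Lemma Dfun_dense (f : X -> R) : continuous_real T f -> forall eps, 0 < eps ->
  exists n, forall x, Rabs (Dfun n x - f x) < eps.
Proof.
  intros Hf eps He. destruct (approx f Hf eps He) as [k [L [cs H]]].
  exists (Cantor.to_nat (k, Cantor.to_nat (L, enc cs))). unfold Dfun.
  rewrite !Cantor.cancel_of_to, dec_surj. auto.
Qed.

Lemma compact_sc : second_countable (graph_open T).
Proof.
  exists (fun m => let (i, j) := Cantor.of_nat m in F_ (T := T) (tube (Dfun i) (/ (INR j + 1)))).
  split.
  - intro m. destruct (Cantor.of_nat m). apply basic_open. apply tube_open. apply Dfun_cont.
  - intros W HW f Wf. destruct (HW f Wf) as [G [HG [Gf HGW]]].
    destruct (tube_in T HT0 Hcomp (proj1_sig f) G (proj2_sig f) HG Gf) as [e [He Htube]].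
    destruct (inv_small (e / 2)) as [j Hj]. lra.
    destruct (Dfun_dense (proj1_sig f) (proj2_sig f) (/ (INR j + 1)) (inv_pos j)) as [i Hi].
    exists (Cantor.to_nat (i, j)). rewrite Cantor.cancel_of_to. split.
    + intro x. unfold tube; simpl. rewrite Rabs_minus_sym. apply Hi.
    + intros g Hg. apply HGW. intro x. apply Htube. specialize (Hg x). specialize (Hi x).
      unfold tube in Hg; simpl in Hg. apply abslt in Hg; apply abslt in Hi. apply ltabs; lra.
Qed.

End Approx.

Lemma five_one {X : Type} (T : (X -> Prop) -> Prop) (HT : tychonoff T) :
  compact_space T /\ metrizable T -> second_countable (graph_open T).
Proof.
  intros [Hc [d [Hm Hd]]]. exact (compact_sc T (proj1 HT) Hc d Hm Hd).
Qed.

Lemma four_five {X : Type} (T : (X -> Prop) -> Prop) (HT : tychonoff T) :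
  ccc (graph_open T) -> compact_space T /\ metrizable T.
Proof.
  intros Hc. destruct (ccc_dense T (proj1 HT) Hc) as [D HD].
  split.
  - apply (ccc_compact T (proj1 HT) (dd T D) (dd_metric T HT D HD) (dd_open_iff T HT D HD)
             (fun n z => proj1_sig (D n) z < 2 / 3)); auto.
    intros U x TU Ux. destruct (base_lemma T HT D HD U x TU Ux) as [n [H1 H2]].
    exists n. split. lra. auto.
  - apply (dense_metrizable T HT D HD).
Qed.

Theorem proposition2p2 (X : Type) (T : (X -> Prop) -> Prop) (HT : tychonoff T) :
  (second_countable (graph_open T) <-> compact_space T /\ metrizable T) /\
  (countable_network (graph_open T) <-> compact_space T /\ metrizable T) /\
  (separable (graph_open T) <-> compact_space T /\ metrizable T) /\
  (ccc (graph_open T) <-> compact_space T /\ metrizable T).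
Proof.
  pose proof (five_one T HT) as H51. pose proof (four_five T HT) as H45.
  pose proof (sc_net (graph_open T)) as H12.
  pose proof (net_sep (graph_open T) (zeroC T (proj1 HT))) as H23.
  pose proof (sep_ccc (graph_open T)) as H34.
  tauto.
Qed.
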